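(* Each of the following sets of four generalized Bell states in $\mathbb{C}^4\otimes\mathbb{C}^4$ is perfectly distinguishable by one-way LOCC using only projective measurements: the ten sets $\{\ket{\psi_{00}},\ket{\psi_{01}}\}\cup P$ with $P$ one of $\{\ket{\psi_{02}},\ket{\psi_{10}}\}$, $\{\ket{\psi_{02}},\ket{\psi_{21}}\}$, $\{\ket{\psi_{02}},\ket{\psi_{32}}\}$, $\{\ket{\psi_{10}},\ket{\psi_{13}}\}$, $\{\ket{\psi_{10}},\ket{\psi_{20}}\}$, $\{\ket{\psi_{10}},\ket{\psi_{31}}\}$, $\{\ket{\psi_{13}},\ket{\psi_{21}}\}$, $\{\ket{\psi_{20}},\ket{\psi_{21}}\}$, $\{\ket{\psi_{20}},\ket{\psi_{32}}\}$, $\{\ket{\psi_{21}},\ket{\psi_{31}}\}$; and the four sets $\{\ket{\psi_{00}},\ket{\psi_{02}}\}\cup Q$ with $Q$ one of $\{\ket{\psi_{10}},\ket{\psi_{12}}\}$, $\{\ket{\psi_{10}},\ket{\psi_{23}}\}$, $\{\ket{\psi_{10}},\ket{\psi_{30}}\}$, $\{\ket{\psi_{21}},\ket{\psi_{30}}\}$.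
   Context: Generalized Bell states in $\mathbb{C}^4\otimes\mathbb{C}^4$ (Alice holds the first factor, Bob the second): $\ket{\psi_{nm}}=\frac12\sum_{j=0}^{3}e^{2\pi i jn/4}\ket{j}_A\ket{j\oplus_4 m}_B$ for $n,m\in\{0,1,2,3\}$, where $j\oplus_4 m=(j+m)\bmod 4$. Perfect distinguishability by one-way LOCC using only projective measurements means: one party performs a projective measurement on her subsystem, communicates the outcome classically, and the other party then performs a projective measurement (depending on that outcome) whose result identifies with certainty which state of the set was shared. *)

(* Defs.v *)
From HB Require Import structures.
From mathcomp Require Import all_boot all_order all_algebra complex reals.
Set Implicit Arguments. Unset Strict Implicit. Unset Printing Implicit Defensive.
Import GRing.Theory Num.Theory.
Local Open Scope ring_scope.

Section QI.
Variable C : numClosedFieldType.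

(* A vector of C^4 (x) C^4 is represented by its 4x4 coefficient matrix:
   x j k = coefficient of |j>_A |k>_B. *)
Definition bistate := 'M[C]_4.

Definition adj (A : 'M[C]_4) : 'M[C]_4 := \matrix_(i, j) (A j i)^*.

(* generalized Bell state psi_{nm} = 1/2 sum_j e^{2 pi i j n/4} |j>|j+m mod 4>,
   with e^{2 pi i/4} = 'i *)
Definition bell (n m : nat) : bistate :=
  \matrix_(j < 4, k < 4)
    (2^-1 * 'i ^+ (j * n) * ((k : nat) == ((j + m) %% 4)%N)%:R).

Definition projective_measurement (n : nat) (P : 'I_n -> 'M[C]_4) : Prop :=
  [/\ forall a, adj (P a) = P a,
      forall a, P a *m P a = P a,
      forall a b, a != b -> P a *m P b = 0
    & \sum_(a < n) P a = 1%:M].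

(* (A (x) B) x, in the matrix representation of C^4 (x) C^4 *)
Definition tensor_apply (A B : 'M[C]_4) (x : bistate) : bistate :=
  A *m x *m B^T.

Definition sqnorm (x : bistate) : C := \sum_(j < 4) \sum_(k < 4) x j k * (x j k)^*.

Definition prob (PA PB : 'M[C]_4) (x : bistate) : C :=
  sqnorm (tensor_apply PA PB x).

(* One-way LOCC, Alice measures first (projective measurement P, outcome a),
   then Bob measures with projective measurement Q a (depending on a,
   outcome b); a guess g a b identifies the shared state with certainty:
   any outcome pair with nonzero probability for the state labelled l
   yields the guess l. *)
Definition oneway_AtoB (S : seq (nat * nat)) : Prop :=
  exists (n m : nat) (P : 'I_n -> 'M[C]_4) (Q : 'I_n -> 'I_m -> 'M[C]_4)
         (g : 'I_n -> 'I_m -> nat * nat),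
    [/\ projective_measurement P,
        forall a, projective_measurement (Q a)
      & forall l, l \in S -> forall a b,
          prob (P a) (Q a b) (bell l.1 l.2) != 0 -> g a b = l].

Definition oneway_BtoA (S : seq (nat * nat)) : Prop :=
  exists (n m : nat) (Q : 'I_n -> 'M[C]_4) (P : 'I_n -> 'I_m -> 'M[C]_4)
         (g : 'I_n -> 'I_m -> nat * nat),
    [/\ projective_measurement Q,
        forall b, projective_measurement (P b)
      & forall l, l \in S -> forall b a,
          prob (P b a) (Q b) (bell l.1 l.2) != 0 -> g b a = l].

Definition oneway_proj_distinguishable (S : seq (nat * nat)) : Prop :=
  oneway_AtoB S \/ oneway_BtoA S.

End QI.

(* Main.v *)
Require Import Defs.
From HB Require Import structures.
From mathcomp Require Import all_boot all_order all_algebra complex reals.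
From mathcomp Require Import ring.
Set Implicit Arguments. Unset Strict Implicit. Unset Printing Implicit Defensive.
Import GRing.Theory Num.Theory.
Local Open Scope ring_scope.

Section Gen.
Variable C : numClosedFieldType.

Lemma adjM (A B : 'M[C]_4) : adj (A *m B) = adj B *m adj A.
Proof.
apply/matrixP=> i j; rewrite !mxE rmorph_sum; apply: eq_bigr => k _.
by rewrite !mxE rmorphM mulrC.
Qed.

Lemma adjK (A : 'M[C]_4) : adj (adj A) = A.
Proof. by apply/matrixP=> i j; rewrite !mxE conjCK. Qed.

Lemma adj_delta (a : 'I_4) : adj (delta_mx a a) = delta_mx a a :> 'M[C]_4.
Proof. by apply/matrixP=> i j; rewrite !mxE conjC_nat andbC. Qed.

Lemma sum_delta : \sum_(a < 4) delta_mx a a = 1%:M :> 'M[C]_4.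
Proof.
apply/matrixP=> i j; rewrite summxE (bigD1 i) //= big1 => [|k nk].
  by rewrite !mxE eqxx /= addr0 eq_sym.
by rewrite mxE eq_sym (negPf nk).
Qed.

Definition proj (U : 'M[C]_4) (a : 'I_4) := U *m delta_mx a a *m adj U.

Lemma pm_unitary U : adj U *m U = 1%:M -> projective_measurement (proj U).
Proof.
move=> H; split.
- by move=> a; rewrite /proj !adjM adjK adj_delta mulmxA.
- move=> a; rewrite /proj !mulmxA -(mulmxA _ (adj U) U) H mulmx1.
  by rewrite -(mulmxA U) mul_delta_mx.
- move=> a b ab; rewrite /proj !mulmxA -(mulmxA _ (adj U) U) H mulmx1.
  by rewrite -(mulmxA U) mul_delta_mx_0 // mulmx0 mul0mx.
- rewrite /proj -mulmx_suml -mulmx_sumr sum_delta mulmx1.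
  exact: mulmx1C.
Qed.

Lemma dMd (M : 'M[C]_4) a b : M a b = 0 -> delta_mx a a *m M *m delta_mx b b = 0.
Proof.
move=> H; apply/matrixP=> i j; rewrite !mxE; apply: big1 => k _.
rewrite !mxE; case: (eqVneq k b) => [->|kb]; last by rewrite /= mulr0.
rewrite big1 ?mul0r // => l _; rewrite !mxE.
by case: (eqVneq l a) => [->|la]; rewrite ?H ?mulr0 // andbF mul0r.
Qed.

Lemma prob0 U W a b x :
  (adj U *m x *m (adj W)^T) a b = 0 -> prob (proj U a) (proj W b) x = 0.
Proof.
move=> H; rewrite /prob /tensor_apply /proj !trmx_mul trmx_delta.
have -> : U *m delta_mx a a *m adj U *m x *m ((adj W)^T *m (delta_mx b b *m W^T))
   = U *m (delta_mx a a *m (adj U *m x *m (adj W)^T) *m delta_mx b b) *m W^T.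
  by rewrite !mulmxA.
rewrite dMd // mulmx0 mul0mx /sqnorm.
by apply: big1 => j _; apply: big1 => k _; rewrite mxE mul0r.
Qed.


Variable w : C.
Hypothesis hw2 : w ^+ 2 = 'i.
Hypothesis hwc : w^* = w ^+ 7.

Lemma w4 : w ^+ 4 = -1.
Proof. by rewrite (exprM w 2 2) hw2 sqrCi. Qed.

Lemma w8 : w ^+ 8 = 1.
Proof. by rewrite (exprM w 4 2) w4 sqrrN expr1n. Qed.

Lemma wmod k : w ^+ k = w ^+ (k %% 8)%N.
Proof. by rewrite {1}(divn_eq k 8) exprD mulnC exprM w8 expr1n mul1r. Qed.

Definition anti (x y : nat) := (x %% 8 == (y + 4) %% 8)%N.

Lemma anti_w x y : anti x y -> w ^+ x = - w ^+ y.
Proof. by move/eqP=> h; rewrite wmod h -wmod exprD w4 mulrN1. Qed.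

Definition chk (r0 r1 r2 r3 : nat) :=
  [|| anti r0 r1 && anti r2 r3, anti r0 r2 && anti r1 r3 | anti r0 r3 && anti r1 r2].

Lemma sum_zero (r : nat -> nat) :
  chk (r 0%N) (r 1%N) (r 2%N) (r 3%N) -> \sum_(j < 4) w ^+ r j = 0.
Proof.
rewrite !big_ord_recr big_ord0 /= add0r.
by case/or3P => /andP [h1 h2]; rewrite (anti_w h1) (anti_w h2); ring.
Qed.

Lemma conjw k : (w ^+ k / 2)^* = w ^+ (7 * k) / 2.
Proof. rewrite rmorphM rmorphXn; change ((w^*) ^+ k * (2^-1)^* = w ^+ (7 * k) / 2). by rewrite hwc -exprM fmorphV rmorph_nat. Qed.


Definition chkf (r : nat -> nat) := chk (r 0%N) (r 1%N) (r 2%N) (r 3%N).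

Definition Umx (e : nat -> nat -> nat) : 'M[C]_4 := \matrix_(j, a) (w ^+ e j a / 2).

Lemma wprod x y : w ^+ (7 * x) / 2 * (w ^+ y / 2) = w ^+ (7 * x + y) * (2^-1 * 2^-1).
Proof. by rewrite exprD; ring. Qed.

Lemma two_neq0 : (2 : C) != 0.
Proof. by rewrite pnatr_eq0. Qed.

Lemma unitaryU (e : nat -> nat -> nat) : (forall a b : 'I_4, a != b -> chkf (fun j => 7 * e j a + e j b)%N) ->
  adj (Umx e) *m Umx e = 1%:M.
Proof.
move=> H; apply/matrixP => a b; rewrite !mxE.
under eq_bigr => j _ do rewrite !mxE conjw wprod.
rewrite -mulr_suml; case: (eqVneq a b) => [<-|ab].
  under eq_bigr => j _ do rewrite addnC -mulSn exprM w8 expr1n.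
  by rewrite sumr_const card_ord /=; field.
by rewrite (sum_zero (H a b ab)) mul0r.
Qed.


Lemma Mentry (e f : nat -> nat -> nat) (n m : nat) (a b : 'I_4) :
  (adj (Umx e) *m bell C n m *m (adj (Umx f))^T) a b =
  (\sum_(j < 4) w ^+ (7 * e j a + 2 * (j * n) + 7 * f ((j + m) %% 4)%N b)%N)
     * (2^-1 * 2^-1 * 2^-1).
Proof.
rewrite mxE; under eq_bigr => k _ do rewrite mxE big_distrl /=.
rewrite exchange_big /= mulr_suml; apply: eq_bigr => j _.
rewrite (bigD1 (Ordinal (ltn_pmod (j + m) (isT : (0 < 4)%N)))) //= big1 => [|k nk].
  rewrite !mxE /= eqxx !conjw -hw2 -exprM !exprD /=; ring.
rewrite !mxE.
have /negPf -> : (k : nat) != ((j + m) %% 4)%N := nk.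
by rewrite !mulr0 mul0r.
Qed.


Definition I4 := iota 0 4.

Lemma in_I4 (a : 'I_4) : (a : nat) \in I4.
Proof. by rewrite mem_iota ltn_ord. Qed.

Definition check1 (e : nat -> nat -> nat) :=
  all (fun a => all (fun b => (a == b) || chkf (fun j => 7 * e j a + e j b)%N) I4) I4.

Definition check2 (fB : nat -> nat -> nat -> nat) :=
  all (fun a => all (fun b => all (fun c =>
    (b == c) || chkf (fun k => 7 * fB a k b + fB a k c)%N) I4) I4) I4.

Definition check3 (S : seq (nat * nat)) (e : nat -> nat -> nat) (fB : nat -> nat -> nat -> nat) :=
  all (fun a => all (fun b => all (fun c =>
    (b == c) || (let: (n, m) := nth (0%N, 0%N) S c in
      chkf (fun j => 7 * e j a + 2 * (j * n) + 7 * fB a ((j + m) %% 4) b)%N)) I4) I4) I4.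

Lemma check1P e : check1 e ->
  forall a b : 'I_4, a != b -> chkf (fun j => 7 * e j a + e j b)%N.
Proof.
move=> /allP /(_ _ (in_I4 _)) H a b ab.
move: (H a) => /allP /(_ _ (in_I4 b)) /orP [/eqP/val_inj ab'|//].
by rewrite ab' eqxx in ab.
Qed.

Lemma check2P fB : check2 fB -> forall a : 'I_4,
  forall b c : 'I_4, b != c -> chkf (fun k => 7 * fB a k b + fB a k c)%N.
Proof.
move=> /allP H a b c bc.
move: (H a (in_I4 a)) => /allP /(_ _ (in_I4 b)) /allP /(_ _ (in_I4 c)) /orP [/eqP/val_inj bc'|//].
by rewrite bc' eqxx in bc.
Qed.

Theorem oneway_check S e fB : size S = 4%N -> check1 e -> check2 fB -> check3 S e fB ->
  oneway_AtoB C S.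
Proof.
move=> hS h1 h2 h3.
exists 4%N, 4%N, (proj (Umx e)), (fun a => proj (Umx (fB a))),
  (fun a b => nth (0%N, 0%N) S b); split.
- exact/pm_unitary/unitaryU/check1P.
- by move=> a; apply/pm_unitary/unitaryU; apply: check2P.
move=> l lS a b; case: (eqVneq (nth (0%N, 0%N) S b) l) => // ne nz; exfalso.
move/eqP: nz; apply.
have cS : (index l S < 4)%N by rewrite -hS index_mem.
have nl : nth (0%N, 0%N) S (index l S) = l := nth_index _ lS.
have cI : index l S \in I4 by rewrite mem_iota.
rewrite prob0 // Mentry.
move/allP: h3 => /(_ _ (in_I4 a)) /allP /(_ _ (in_I4 b)) /allP /(_ _ cI) /orP [/eqP bc|].
  by move: ne; rewrite bc nl eqxx.
rewrite nl; case: l {lS ne nl cS cI} => n m /= H.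
by rewrite (sum_zero H) mul0r.
Qed.

End Gen.

Lemma w_conj (C : numClosedFieldType) : (sqrtC ('i : C))^* = sqrtC 'i ^+ 7.
Proof.
set w := sqrtC 'i.
have hw2 : w ^+ 2 = 'i := sqrtCK _.
have n1 : w * w^* = 1 by rewrite -normCK -normrX hw2 normCi.
have h8 := w8 hw2.
by rewrite -[LHS]mulr1 -h8 (exprS w 7) mulrA [w^* * w]mulrC n1 mul1r.
Qed.

Definition B1 : seq (seq nat) := [:: [:: 0; 1; 0; 5]; [:: 0; 3; 4; 3]; [:: 0; 5; 0; 1]; [:: 0; 7; 4; 7]]%N.
Definition eB (j a : nat) : nat := nth 0%N (nth [::] B1 a) j.
Definition fS (S : seq (nat * nat)) (a k b : nat) : nat :=
  let: (n, m) := nth (0%N, 0%N) S b in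
  let jj := ((k + 4 - m) %% 4)%N in (7 * eB jj a + 2 * (jj * n))%N.
Definition good (S : seq (nat * nat)) :=
  [&& size S == 4%N, check1 eB, check2 (fS S) & check3 S eB (fS S)].

Lemma good_ok (R : realType) S : good S -> oneway_proj_distinguishable (R[i]) S.
Proof.
case/and4P => /eqP h0 h1 h2 h3; left.
exact: (oneway_check (sqrtCK 'i) (w_conj _) h0 h1 h2 h3).
Qed.

Theorem theorem3 (R : realType) :
  (forall P : seq (nat * nat),
     P \in [:: [:: (0,2); (1,0)]; [:: (0,2); (2,1)]; [:: (0,2); (3,2)];
               [:: (1,0); (1,3)]; [:: (1,0); (2,0)]; [:: (1,0); (3,1)];
               [:: (1,3); (2,1)]; [:: (2,0); (2,1)]; [:: (2,0); (3,2)];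
               [:: (2,1); (3,1)]]%N ->
     oneway_proj_distinguishable (R[i]) ([:: (0,0); (0,1)]%N ++ P))
  /\
  (forall Q : seq (nat * nat),
     Q \in [:: [:: (1,0); (1,2)]; [:: (1,0); (2,3)]; [:: (1,0); (3,0)];
               [:: (2,1); (3,0)]]%N ->
     oneway_proj_distinguishable (R[i]) ([:: (0,0); (0,2)]%N ++ Q)).
Proof.
split.
- have H : all (fun P => good ([:: (0,0); (0,1)]%N ++ P))
     [:: [:: (0,2); (1,0)]; [:: (0,2); (2,1)]; [:: (0,2); (3,2)];
               [:: (1,0); (1,3)]; [:: (1,0); (2,0)]; [:: (1,0); (3,1)];
               [:: (1,3); (2,1)]; [:: (2,0); (2,1)]; [:: (2,0); (3,2)];
               [:: (2,1); (3,1)]]%N by vm_compute.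
  by move=> P HP; apply: good_ok; exact: (allP H P HP).
- have H : all (fun Q => good ([:: (0,0); (0,2)]%N ++ Q))
     [:: [:: (1,0); (1,2)]; [:: (1,0); (2,3)]; [:: (1,0); (3,0)];
               [:: (2,1); (3,0)]]%N by vm_compute.
  by move=> Q HQ; apply: good_ok; exact: (allP H Q HQ).
Qed.
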